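(* There exist sequences $(\lambda_n)_{n\ge0}$ of positive numbers and $(b_n)_{n\ge0}$ of real numbers such that the classical Jacobi matrix $(Ju)(n)=\lambda_nu(n+1)+b_nu(n)+\lambda_{n-1}u(n-1)$ is not essentially selfadjoint, while the classical Jacobi matrix $(J'u)(n)=\lambda_nu(n+1)+\lambda_{n-1}u(n-1)$ is essentially selfadjoint (both considered in $\ell^2(\mathbb N_0)$ with domain the finitely supported sequences, and with the convention $\lambda_{-1}u(-1)=0$). *)

(* Defs.v *)
(* classical reals. Complex numbers are modelled as pairs (re, im). *)
From Stdlib Require Import Reals.
Open Scope R_scope.

Definition Cseq := nat -> (R * R)%type.

Definition series_to (f : nat -> R) (l : R) : Prop :=
  Un_cv (fun N => sum_f_R0 f N) l.

Definition l2 (u : Cseq) : Prop :=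
  exists l, series_to (fun n => fst (u n) ^ 2 + snd (u n) ^ 2) l.

Definition dist2_lt (u v : Cseq) (eps : R) : Prop :=
  exists l, series_to (fun n => (fst (u n) - fst (v n)) ^ 2
                               + (snd (u n) - snd (v n)) ^ 2) l /\ l < eps.

(* <u, v> = a + i c, with <u,v> = sum_n u(n) * conj (v(n)) *)
Definition inner_is (u v : Cseq) (a c : R) : Prop :=
  series_to (fun n => fst (u n) * fst (v n) + snd (u n) * snd (v n)) a /\
  series_to (fun n => snd (u n) * fst (v n) - fst (u n) * snd (v n)) c.

(* (possibly unbounded) operators on l^2 are represented by their graphs *)
Definition graph := Cseq -> Cseq -> Prop.

Definition closure (G : graph) : graph := fun u x =>
  l2 u /\ l2 x /\
  forall eps, 0 < eps ->
    exists u' x', G u' x' /\ dist2_lt u u' eps /\ dist2_lt x x' eps.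

Definition adjoint (G : graph) : graph := fun v w =>
  l2 v /\ l2 w /\
  forall u x, G u x -> forall a c, inner_is x v a c -> inner_is u w a c.

Definition ess_selfadjoint (G : graph) : Prop :=
  forall u x, closure G u x <-> adjoint (closure G) u x.

Definition fin_supp (u : Cseq) : Prop :=
  exists N, forall n, (N <= n)%nat -> u n = (0, 0).

Definition cscale (r : R) (z : R * R) : R * R := (r * fst z, r * snd z).
Definition cadd (z w : R * R) : R * R := (fst z + fst w, snd z + snd w).

Definition jacobi_apply (lam b : nat -> R) (u : Cseq) : Cseq := fun n =>
  cadd (cadd (cscale (lam n) (u (S n))) (cscale (b n) (u n)))
       (match n with O => (0, 0) | S m => cscale (lam m) (u m) end).

Definition jacobi (lam b : nat -> R) : graph := fun u x =>
  fin_supp u /\ forall n, x n = jacobi_apply lam b u n.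

(* Main.v *)
Require Import Defs.
From Stdlib Require Import Reals Lra Lia Bool Arith.
Open Scope R_scope.

Lemma st_ext f g l : (forall n, f n = g n) -> series_to f l -> series_to g l.
Proof. intros H Hf. unfold series_to in *. apply Un_cv_ext with (2:=Hf).
  intro N. apply sum_eq. intros; auto. Qed.

Lemma st_plus f g a b : series_to f a -> series_to g b ->
  series_to (fun n => f n + g n) (a + b).
Proof. intros Hf Hg. unfold series_to in *.
  apply Un_cv_ext with (fun N => sum_f_R0 f N + sum_f_R0 g N).
  - intro N. symmetry. apply plus_sum.
  - apply CV_plus; auto. Qed.

Lemma st_minus f g a b : series_to f a -> series_to g b ->
  series_to (fun n => f n - g n) (a - b).
Proof. intros Hf Hg. unfold series_to in *.
  apply Un_cv_ext with (fun N => sum_f_R0 f N - sum_f_R0 g N).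
  - intro N. symmetry. apply minus_sum.
  - apply CV_minus; auto. Qed.

Lemma cv_const c : Un_cv (fun _ => c) c.
Proof. intros e He. exists 0%nat. intros. unfold Rdist. rewrite Rminus_diag, Rabs_R0; auto. Qed.

Lemma st_scal c f a : series_to f a -> series_to (fun n => c * f n) (c * a).
Proof. intros Hf. unfold series_to in *.
  apply Un_cv_ext with (fun N => c * sum_f_R0 f N).
  - intro N. rewrite scal_sum. apply sum_eq. intros; ring.
  - apply CV_mult; auto. apply cv_const. Qed.

Lemma st_le f g a b : (forall n, f n <= g n) -> series_to f a -> series_to g b -> a <= b.
Proof. intros H Hf Hg. apply (@Rle_cv_lim (fun N => sum_f_R0 f N) (fun N => sum_f_R0 g N)); auto; intro N; apply sum_Rle; auto. Qed.

Lemma st_uniq f a b : series_to f a -> series_to f b -> a = b.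
Proof. apply UL_sequence. Qed.

Lemma st_evconst f g a N : (forall M, (N <= M)%nat -> sum_f_R0 f M = sum_f_R0 g M) ->
  series_to f a -> series_to g a.
Proof. intros H Hf e He. destruct (Hf e He) as [N0 HN0]. exists (max N N0). intros n Hn.
  rewrite <- H by lia. apply HN0. lia. Qed.

Lemma sum_zero_tail f N : (forall n, (N <= n)%nat -> f n = 0) ->
  forall M, (N <= M)%nat -> sum_f_R0 f M = sum_f_R0 f N.
Proof. intros H M HM. induction HM; auto. simpl. rewrite IHHM, H by lia. ring. Qed.

Lemma st_finsupp f N : (forall n, (N <= n)%nat -> f n = 0) -> series_to f (sum_f_R0 f N).
Proof. intros H. apply st_evconst with (f:=f) (N:=N).
  - auto.
  - intros e He. exists N. intros n Hn. unfold Rdist. rewrite (sum_zero_tail f N H n) by lia.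
    rewrite Rminus_diag, Rabs_R0; auto. Qed.

Lemma st_finsupp_ex f N : (forall n, (N <= n)%nat -> f n = 0) -> exists l, series_to f l.
Proof. intros H. eexists. apply (st_finsupp f N H). Qed.

Lemma st_nonneg_bound f B : (forall n, 0 <= f n) -> (forall N, sum_f_R0 f N <= B) ->
  exists l, series_to f l /\ l <= B.
Proof. intros H0 HB.
  assert (Hg : Un_growing (fun N => sum_f_R0 f N)).
  { intro n. simpl. specialize (H0 (S n)). lra. }
  assert (Hub : has_ub (fun N => sum_f_R0 f N)).
  { exists B. intros x [n ->]. apply HB. }
  destruct (growing_cv _ Hg Hub) as [l Hl]. exists l. split; auto.
  apply (@Rle_cv_lim (fun N => sum_f_R0 f N) (fun _ => B)); auto.
  apply cv_const. Qed.

Lemma st_partial_le f l : (forall n, 0 <= f n) -> series_to f l -> forall N, sum_f_R0 f N <= l.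
Proof. intros H Hf N. apply sum_incr; auto. Qed.

Lemma st_comp f g l : (forall n, 0 <= f n <= g n) -> series_to g l -> exists l', series_to f l'.
Proof. intros H Hg. destruct (Rseries_CV_comp f g H (exist _ l Hg)) as [l' Hl']. eauto. Qed.

Definition indf (f : nat -> R) (m : nat) : nat -> R := fun n => if (m <? n)%nat then f n else 0.

Lemma sum_indf f m N : sum_f_R0 (indf f m) N = sum_f_R0 f N - sum_f_R0 f (Nat.min N m).
Proof. induction N.
  - simpl. unfold indf. simpl. ring.
  - change (sum_f_R0 (indf f m) (S N)) with (sum_f_R0 (indf f m) N + indf f m (S N)).
    rewrite IHN. unfold indf.
    destruct (Nat.ltb_spec m (S N)).
    + rewrite (Nat.min_r N m) by lia. rewrite (Nat.min_r (S N) m) by lia. simpl. ring.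
    + rewrite (Nat.min_l N m) by lia. rewrite (Nat.min_l (S N) m) by lia. simpl. ring. Qed.

Lemma tail_bound f l m N : (forall n, 0 <= f n) -> series_to f l ->
  sum_f_R0 (indf f m) N <= l - sum_f_R0 f m.
Proof. intros H0 Hf. rewrite sum_indf.
  destruct (Nat.le_ge_cases N m).
  - rewrite Nat.min_l by auto. pose proof (st_partial_le f l H0 Hf m). lra.
  - rewrite Nat.min_r by auto. pose proof (st_partial_le f l H0 Hf N). lra. Qed.

Lemma indf_nonneg f m n : (forall n, 0 <= f n) -> 0 <= indf f m n.
Proof. intros H. unfold indf. destruct (m <? n)%nat; auto; lra. Qed.

Lemma tail_small f l : series_to f l -> forall d, 0 < d -> exists m0, forall m, (m0 <= m)%nat ->
  l - sum_f_R0 f m < d.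
Proof. intros Hf d Hd. destruct (Hf d Hd) as [N HN]. exists N. intros m Hm.
  specialize (HN m Hm). unfold Rdist in HN. apply Rabs_def2 in HN. lra. Qed.

Lemma term_le_tail f l n : (forall n, 0 <= f n) -> series_to f l -> f (S n) <= l - sum_f_R0 f n.
Proof. intros H0 Hf. pose proof (st_partial_le f l H0 Hf (S n)). simpl in H. lra. Qed.

Lemma term_small f l : (forall n, 0 <= f n) -> series_to f l -> forall d, 0 < d ->
  exists N, forall n, (N <= n)%nat -> f n < d.
Proof. intros H0 Hf d Hd. destruct (tail_small f l Hf d Hd) as [m0 Hm0].
  exists (S m0). intros n Hn. destruct n. lia.
  pose proof (term_le_tail f l n H0 Hf). pose proof (Hm0 n ltac:(lia)). lra. Qed.

Lemma sum_cnt c m p N : 0 <= c ->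
  sum_f_R0 (fun n => if ((m <? n) && (n <=? m + p))%nat then c else 0) N <= c * INR p.
Proof. intros Hc.
  rewrite (sum_eq _ (fun n => indf (fun _ => c) m n - indf (fun _ => c) (m+p) n)).
  2:{ intros i _. unfold indf. destruct (Nat.ltb_spec m i); destruct (Nat.leb_spec i (m+p));
      destruct (Nat.ltb_spec (m+p) i); simpl; try lia; ring. }
  rewrite minus_sum, !sum_indf, !sum_cte.
  assert (INR (S (Nat.min N (m + p))) <= INR (S (Nat.min N m)) + INR p).
  { rewrite <- plus_INR. apply le_INR. lia. }
  assert (INR (S (Nat.min N m)) <= INR (S (Nat.min N (m+p)))).
  { apply le_INR. lia. }
  nra. Qed.

Lemma sum_geo q m N : 0 < q < 1 ->
  sum_f_R0 (indf (fun n => q ^ n) m) N <= q ^ S m / (1 - q).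
Proof. intros Hq. rewrite sum_indf, !tech3 by lra.
  assert (0 < 1 - q) by lra.
  destruct (Nat.le_ge_cases N m).
  - rewrite Nat.min_l by auto. unfold Rdiv. rewrite Rminus_diag_eq by reflexivity.
    apply Rle_trans with 0;[lra|]. apply Rmult_le_pos. apply pow_le; lra. left; apply Rinv_0_lt_compat; lra.
  - rewrite Nat.min_r by auto.
    assert (0 <= q ^ S N) by (apply pow_le; lra).
    apply Rle_trans with ((q ^ S m - q ^ S N) / (1 - q)).
    + right. field. lra.
    + unfold Rdiv. apply Rmult_le_compat_r. left; apply Rinv_0_lt_compat; lra. lra. Qed.

Definition nsq (u : Cseq) (n : nat) : R := fst (u n) ^ 2 + snd (u n) ^ 2.
Definition re (u v : Cseq) (n : nat) : R := fst (u n) * fst (v n) + snd (u n) * snd (v n).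
Definition im (u v : Cseq) (n : nat) : R := snd (u n) * fst (v n) - fst (u n) * snd (v n).
Definition csub (u v : Cseq) : Cseq := fun n => (fst (u n) - fst (v n), snd (u n) - snd (v n)).
Definition cplus (u v : Cseq) : Cseq := fun n => (fst (u n) + fst (v n), snd (u n) + snd (v n)).
Definition rot (u : Cseq) : Cseq := fun n => (snd (u n), - fst (u n)).

Lemma l2_nsq u : l2 u <-> exists l, series_to (nsq u) l.
Proof. reflexivity. Qed.

Lemma dist2_nsq u v e : dist2_lt u v e <-> exists l, series_to (nsq (csub u v)) l /\ l < e.
Proof. reflexivity. Qed.

Lemma nsq_nonneg u n : 0 <= nsq u n.
Proof. unfold nsq. nra. Qed.

Lemma l2_csub u v : l2 u -> l2 v -> l2 (csub u v).
Proof. intros [a Ha] [b Hb]. apply st_comp with (g := fun n => 2 * nsq u n + 2 * nsq v n)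
  (l := 2 * a + 2 * b).
  - intro n. split. apply nsq_nonneg. unfold nsq, csub; simpl.
    pose proof (pow2_ge_0 (fst (u n) + fst (v n))). pose proof (pow2_ge_0 (snd (u n) + snd (v n))). nra.
  - apply st_plus; apply st_scal; auto. Qed.

Lemma l2_cplus u v : l2 u -> l2 v -> l2 (cplus u v).
Proof. intros [a Ha] [b Hb]. apply st_comp with (g := fun n => 2 * nsq u n + 2 * nsq v n)
  (l := 2 * a + 2 * b).
  - intro n. split. apply nsq_nonneg. unfold nsq, cplus; simpl.
    pose proof (pow2_ge_0 (fst (u n) - fst (v n))). pose proof (pow2_ge_0 (snd (u n) - snd (v n))). nra.
  - apply st_plus; apply st_scal; auto. Qed.

Lemma l2_rot u : l2 u -> l2 (rot u).
Proof. intros [a Ha]. exists a. apply st_ext with (2 := Ha). intro n. unfold rot; simpl. ring. Qed.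

Lemma re_conv u v : l2 u -> l2 v -> exists a, series_to (re u v) a.
Proof. intros Hu Hv. destruct (l2_cplus u v Hu Hv) as [a Ha]. destruct (l2_csub u v Hu Hv) as [b Hb].
  exists (/4 * (a - b)). apply st_ext with (fun n => /4 * (nsq (cplus u v) n - nsq (csub u v) n)).
  - intro n. unfold re, nsq, cplus, csub; simpl. field.
  - apply st_scal. apply st_minus; auto. Qed.

Lemma im_conv u v : l2 u -> l2 v -> exists a, series_to (im u v) a.
Proof. intros Hu Hv. destruct (re_conv (rot u) v (l2_rot u Hu) Hv) as [a Ha]. exists a.
  apply st_ext with (2 := Ha). intro n. unfold re, im, rot; simpl. ring. Qed.

Lemma re_bound p q n t : 0 < t -> Rabs (re p q n) <= (t * nsq p n + nsq q n / t) / 2.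
Proof. intros Ht. unfold re, nsq.
  set (a := fst (p n)). set (b := snd (p n)). set (c := fst (q n)). set (d := snd (q n)).
  apply Rabs_le. split.
  - assert (0 <= (t * a + c) ^ 2 + (t * b + d) ^ 2) by (pose proof (pow2_ge_0 (t*a+c)); pose proof (pow2_ge_0 (t*b+d)); lra).
    assert ((t * a + c) ^ 2 + (t * b + d) ^ 2 = t * (t * (a^2+b^2) + (c^2+d^2)/t + 2 * (a*c+b*d))) by (field; lra).
    assert (0 <= t * (a^2+b^2) + (c^2+d^2)/t + 2 * (a*c+b*d)).
    { apply Rmult_le_reg_l with t; auto. lra. }
    lra.
  - assert (0 <= (t * a - c) ^ 2 + (t * b - d) ^ 2) by (pose proof (pow2_ge_0 (t*a-c)); pose proof (pow2_ge_0 (t*b-d)); lra).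
    assert ((t * a - c) ^ 2 + (t * b - d) ^ 2 = t * (t * (a^2+b^2) + (c^2+d^2)/t - 2 * (a*c+b*d))) by (field; lra).
    assert (0 <= t * (a^2+b^2) + (c^2+d^2)/t - 2 * (a*c+b*d)).
    { apply Rmult_le_reg_l with t; auto. lra. }
    lra. Qed.

Lemma im_bound p q n t : 0 < t -> Rabs (im p q n) <= (t * nsq p n + nsq q n / t) / 2.
Proof. intros Ht. replace (im p q n) with (re (rot p) q n) by (unfold re, im, rot; simpl; ring).
  replace (nsq p n) with (nsq (rot p) n) by (unfold nsq, rot; simpl; ring). apply re_bound; auto. Qed.

Lemma abs_le_split x y : Rabs x <= y -> - y <= x <= y.
Proof. intros H. pose proof (Rle_abs x). pose proof (Rle_abs (- x)). rewrite Rabs_Ropp in H1. lra. Qed.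

Lemma series_abs_bound f g a c : (forall n, Rabs (f n) <= g n) -> series_to f a -> series_to g c ->
  Rabs a <= c.
Proof. intros H Hf Hg. apply Rabs_le. split.
  - pose proof (st_scal (-1) g c Hg).
    assert (-1 * c <= a). { apply st_le with (2 := H0) (3 := Hf). intro n. specialize (H n).
      apply abs_le_split in H. lra. }
    lra.
  - apply st_le with (2 := Hf) (3 := Hg). intro n. specialize (H n). apply abs_le_split in H. lra. Qed.

Lemma cont_re p p' q e a a' Q t : 0 < t -> dist2_lt p p' e -> series_to (re p q) a -> series_to (re p' q) a' ->
  series_to (nsq q) Q -> Rabs (a - a') <= (t * e + Q / t) / 2.
Proof. intros Ht [l [Hl Hle]] Ha Ha' HQ.
  assert (H1 : series_to (re (csub p p') q) (a - a')).
  { apply st_ext with (2 := st_minus _ _ _ _ Ha Ha'). intro n. unfold re, csub; simpl. ring. }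
  assert (H2 : series_to (fun n => (t * nsq (csub p p') n + nsq q n / t) / 2) ((t * l + Q / t) / 2)).
  { apply st_ext with (fun n => / 2 * (t * nsq (csub p p') n + / t * nsq q n)).
    intro n; unfold Rdiv; ring.
    replace ((t * l + Q / t) / 2) with (/2 * (t * l + / t * Q)) by (unfold Rdiv; ring).
    apply st_scal. apply st_plus; apply st_scal; auto. }
  pose proof (series_abs_bound _ _ _ _ (fun n => re_bound (csub p p') q n t Ht) H1 H2).
  assert (t * l <= t * e) by (apply Rmult_le_compat_l; lra). lra. Qed.

Lemma cont_im p p' q e a a' Q t : 0 < t -> dist2_lt p p' e -> series_to (im p q) a -> series_to (im p' q) a' ->
  series_to (nsq q) Q -> Rabs (a - a') <= (t * e + Q / t) / 2.
Proof. intros Ht [l [Hl Hle]] Ha Ha' HQ.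
  assert (H1 : series_to (im (csub p p') q) (a - a')).
  { apply st_ext with (2 := st_minus _ _ _ _ Ha Ha'). intro n. unfold im, csub; simpl. ring. }
  assert (H2 : series_to (fun n => (t * nsq (csub p p') n + nsq q n / t) / 2) ((t * l + Q / t) / 2)).
  { apply st_ext with (fun n => / 2 * (t * nsq (csub p p') n + / t * nsq q n)).
    intro n; unfold Rdiv; ring.
    replace ((t * l + Q / t) / 2) with (/2 * (t * l + / t * Q)) by (unfold Rdiv; ring).
    apply st_scal. apply st_plus; apply st_scal; auto. }
  pose proof (series_abs_bound _ _ _ _ (fun n => im_bound (csub p p') q n t Ht) H1 H2).
  assert (t * l <= t * e) by (apply Rmult_le_compat_l; lra). lra. Qed.

Definition rJ (lam b : nat -> R) (f : nat -> R) (n : nat) : R :=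
  lam n * f (S n) + b n * f n + match n with O => 0 | S m => lam m * f m end.

Lemma japp_fst lam b u n : fst (jacobi_apply lam b u n) = rJ lam b (fun k => fst (u k)) n.
Proof. unfold jacobi_apply, rJ, cadd, cscale. destruct n; simpl; ring. Qed.
Lemma japp_snd lam b u n : snd (jacobi_apply lam b u n) = rJ lam b (fun k => snd (u k)) n.
Proof. unfold jacobi_apply, rJ, cadd, cscale. destruct n; simpl; ring. Qed.

Lemma green lam b f g M :
  sum_f_R0 (fun n => rJ lam b f n * g n - f n * rJ lam b g n) M = lam M * (f (S M) * g M - f M * g (S M)).
Proof. induction M.
  - simpl. unfold rJ. ring.
  - simpl sum_f_R0. rewrite IHM. unfold rJ. ring. Qed.

Lemma green_re lam b u v N : (forall n, (N <= n)%nat -> u n = (0,0)) ->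
  forall M, (N <= M)%nat -> sum_f_R0 (re (jacobi_apply lam b u) v) M = sum_f_R0 (re u (jacobi_apply lam b v)) M.
Proof. intros H M HM. apply Rminus_diag_uniq. rewrite <- minus_sum.
  rewrite (sum_eq _ (fun n => (rJ lam b (fun k => fst (u k)) n * fst (v n) - fst (u n) * rJ lam b (fun k => fst (v k)) n)
                           + (rJ lam b (fun k => snd (u k)) n * snd (v n) - snd (u n) * rJ lam b (fun k => snd (v k)) n))).
  2:{ intros i _. unfold re. rewrite !japp_fst, !japp_snd. ring. }
  rewrite plus_sum, !green. rewrite (H M), (H (S M)) by lia. simpl. ring. Qed.

Lemma green_im lam b u v N : (forall n, (N <= n)%nat -> u n = (0,0)) ->
  forall M, (N <= M)%nat -> sum_f_R0 (im (jacobi_apply lam b u) v) M = sum_f_R0 (im u (jacobi_apply lam b v)) M.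
Proof. intros H M HM. apply Rminus_diag_uniq. rewrite <- minus_sum.
  rewrite (sum_eq _ (fun n => (rJ lam b (fun k => snd (u k)) n * fst (v n) - snd (u n) * rJ lam b (fun k => fst (v k)) n)
                           - (rJ lam b (fun k => fst (u k)) n * snd (v n) - fst (u n) * rJ lam b (fun k => snd (v k)) n))).
  2:{ intros i _. unfold im. rewrite !japp_fst, !japp_snd. ring. }
  rewrite minus_sum, !green. rewrite (H M), (H (S M)) by lia. simpl. ring. Qed.

Lemma sym_fin lam b u v a c : fin_supp u ->
  inner_is (jacobi_apply lam b u) v a c -> inner_is u (jacobi_apply lam b v) a c.
Proof. intros [N HN] [Ha Hc]. split.
  - apply st_evconst with (2 := Ha) (N := N). intros; apply (green_re lam b u v N); auto.
  - apply st_evconst with (2 := Hc) (N := N). intros; apply (green_im lam b u v N); auto. Qed.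

Lemma sym_fin' lam b u v a c : fin_supp u ->
  inner_is u (jacobi_apply lam b v) a c -> inner_is (jacobi_apply lam b u) v a c.
Proof. intros [N HN] [Ha Hc]. split.
  - apply st_evconst with (2 := Ha) (N := N). intros; symmetry; apply (green_re lam b u v N); auto.
  - apply st_evconst with (2 := Hc) (N := N). intros; symmetry; apply (green_im lam b u v N); auto. Qed.

Lemma rJ_lin lam b f g n : rJ lam b f n - rJ lam b g n = rJ lam b (fun k => f k - g k) n.
Proof. unfold rJ. destruct n; ring. Qed.

Lemma rJ_bound lam b f n d : (forall k, Rabs (f k) <= d) ->
  Rabs (rJ lam b f n) <= (Rabs (lam n) + Rabs (b n) + Rabs (lam (pred n))) * d.
Proof. intros H. unfold rJ.
  assert (Hd : 0 <= d) by (specialize (H 0%nat); pose proof (Rabs_pos (f 0%nat)); lra).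
  assert (forall x k, Rabs (x * f k) <= Rabs x * d).
  { intros x k. rewrite Rabs_mult. apply Rmult_le_compat_l. apply Rabs_pos. auto. }
  destruct n.
  - simpl. rewrite Rplus_0_r. eapply Rle_trans. apply Rabs_triang.
    pose proof (H0 (lam 0%nat) 1%nat). pose proof (H0 (b 0%nat) 0%nat). pose proof (Rabs_pos (lam 0%nat)).
    assert (0 <= Rabs (lam 0%nat) * d) by (apply Rmult_le_pos; auto; apply Rabs_pos). nra.
  - simpl. eapply Rle_trans. apply Rabs_triang. eapply Rle_trans. apply Rplus_le_compat_r. apply Rabs_triang.
    pose proof (H0 (lam (S n)) (S (S n))). pose proof (H0 (b (S n)) (S n)). pose proof (H0 (lam n) n). nra. Qed.

Lemma coord_small u v e k : dist2_lt u v e -> (fst (u k) - fst (v k)) ^ 2 < e /\ (snd (u k) - snd (v k)) ^ 2 < e.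
Proof. intros [l [Hl Hle]].
  assert (Hk : nsq (csub u v) k <= l).
  { pose proof (st_partial_le _ _ (nsq_nonneg (csub u v)) Hl k).
    destruct k. simpl in H. auto.
    simpl in H. pose proof (cond_pos_sum (nsq (csub u v)) k (nsq_nonneg _)). lra. }
  unfold nsq, csub in Hk; simpl in Hk.
  pose proof (pow2_ge_0 (fst (u k) - fst (v k))). pose proof (pow2_ge_0 (snd (u k) - snd (v k))). lra. Qed.

Lemma sq_lt_abs x d : 0 < d -> x ^ 2 < d ^ 2 -> Rabs x < d.
Proof. intros Hd H. destruct (Rle_dec 0 x).
  - rewrite Rabs_pos_eq by auto. nra.
  - rewrite Rabs_left by lra. nra. Qed.

Lemma eq_of_small x y : (forall e, 0 < e -> Rabs (x - y) <= e) -> x = y.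
Proof. intros H. destruct (Req_dec x y); auto. exfalso.
  assert (0 < Rabs (x - y)) by (apply Rabs_pos_lt; lra).
  specialize (H (Rabs (x - y) / 2) ltac:(lra)). lra. Qed.

Lemma jac_finsupp lam b u N : (forall n, (N <= n)%nat -> u n = (0,0)) ->
  forall n, (S N <= n)%nat -> jacobi_apply lam b u n = (0,0).
Proof. intros H n Hn. unfold jacobi_apply. destruct n. lia.
  rewrite (H (S (S n))), (H (S n)), (H n) by lia. unfold cadd, cscale; simpl. f_equal; ring. Qed.

Lemma finsupp_l2 u : fin_supp u -> l2 u.
Proof. intros [N HN]. apply (st_finsupp_ex _ N). intros n Hn. rewrite HN by auto. simpl. ring. Qed.

Lemma G_closure lam b u x : jacobi lam b u x -> closure (jacobi lam b) u x.
Proof. intros [Hu Hx]. split; [|split].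
  - apply finsupp_l2; auto.
  - destruct Hu as [N HN]. apply finsupp_l2. exists (S N). intros n Hn. rewrite Hx.
    apply (jac_finsupp lam b u N HN); auto.
  - intros e He. exists u, x. split. split; auto.
    assert (forall w, dist2_lt w w e).
    { intros w. exists 0. split; auto. apply st_ext with (fun _ => 0).
      intro n; simpl; ring. intros e' He'. exists 0%nat. intros. unfold Rdist.
      rewrite sum_cte. simpl. rewrite Rmult_0_l, Rminus_0_r, Rabs_R0. auto. }
    auto. Qed.

Lemma closure_pw lam b u x : closure (jacobi lam b) u x -> forall n, x n = jacobi_apply lam b u n.
Proof. intros [Hu [Hx Hcl]] n.
  set (C := Rabs (lam n) + Rabs (b n) + Rabs (lam (pred n)) + 1).
  assert (HC : 1 <= C) by (unfold C; pose proof (Rabs_pos (lam n)); pose proof (Rabs_pos (b n));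
    pose proof (Rabs_pos (lam (pred n))); lra).
  assert (key : forall e, 0 < e -> Rabs (fst (x n) - fst (jacobi_apply lam b u n)) <= e /\
                                 Rabs (snd (x n) - snd (jacobi_apply lam b u n)) <= e).
  { intros e He. set (d := e / (2 * C)). assert (Hd : 0 < d) by (unfold d; apply Rdiv_lt_0_compat; lra).
    destruct (Hcl (d ^ 2) ltac:(apply pow_lt; lra)) as [u' [x' [[Hfin Hx'] [Hdu Hdx]]]].
    assert (Hcu : forall k, Rabs (fst (u' k) - fst (u k)) <= d /\ Rabs (snd (u' k) - snd (u k)) <= d).
    { intro k. destruct (coord_small _ _ _ k Hdu) as [H1 H2]. split; left.
      rewrite Rabs_minus_sym. apply sq_lt_abs; auto.
      rewrite Rabs_minus_sym. apply sq_lt_abs; auto. }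
    destruct (coord_small _ _ _ n Hdx) as [H1 H2].
    apply sq_lt_abs in H1; auto. apply sq_lt_abs in H2; auto.
    rewrite Hx' in H1, H2. rewrite japp_fst in H1 |- *. rewrite japp_snd in H2 |- *.
    pose proof (rJ_bound lam b (fun k => fst (u' k) - fst (u k)) n d (fun k => proj1 (Hcu k))) as B1.
    pose proof (rJ_bound lam b (fun k => snd (u' k) - snd (u k)) n d (fun k => proj2 (Hcu k))) as B2.
    rewrite <- rJ_lin in B1, B2.
    assert (Hcd : (Rabs (lam n) + Rabs (b n) + Rabs (lam (pred n))) * d + d = C * d) by (unfold C; ring).
    assert (C * d = e / 2) by (unfold d; field; lra).
    split.
    - set (p := rJ lam b (fun k => fst (u' k)) n) in *. set (q := rJ lam b (fun k => fst (u k)) n) in *.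
      replace (fst (x n) - q) with ((fst (x n) - p) + (p - q)) by ring.
      eapply Rle_trans. apply Rabs_triang. lra.
    - set (p := rJ lam b (fun k => snd (u' k)) n) in *. set (q := rJ lam b (fun k => snd (u k)) n) in *.
      replace (snd (x n) - q) with ((snd (x n) - p) + (p - q)) by ring.
      eapply Rle_trans. apply Rabs_triang. lra. }
  destruct (x n) as [x1 x2] eqn:E. destruct (jacobi_apply lam b u n) as [y1 y2] eqn:E2.
  f_equal; apply eq_of_small; intros e He; destruct (key e He); simpl in *; auto. Qed.

Lemma combine_small a a' a1 V Y e t eps : 0 < e -> V <= Y + V ->
  t = (V + Y + 1) / e -> eps = e / (2 * t) -> 0 <= V -> 0 <= Y ->
  Rabs (a - a1) <= (t * eps + V / t) / 2 -> Rabs (a' - a1) <= (t * eps + Y / t) / 2 ->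
  Rabs (a' - a) <= e.
Proof. intros He _ Ht Heps HV HY H1 H2.
  assert (Htp : 0 < t) by (rewrite Ht; apply Rdiv_lt_0_compat; lra).
  assert (t * eps = e / 2) by (rewrite Heps; field; lra).
  assert ((V + Y) / t <= e) .
  { rewrite Ht. apply Rle_trans with ((V + Y + 1) / ((V + Y + 1) / e)).
    unfold Rdiv. apply Rmult_le_compat_r. left; apply Rinv_0_lt_compat. apply Rdiv_lt_0_compat; lra. lra.
    right. field. lra. }
  replace (a' - a) with ((a' - a1) - (a - a1)) by ring.
  eapply Rle_trans. apply Rabs_triang. rewrite Rabs_Ropp.
  assert (V / t + Y / t = (V + Y) / t) by (field; lra). lra. Qed.

Lemma nonneg_lim f l : (forall n, 0 <= f n) -> series_to f l -> 0 <= l.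
Proof. intros H Hf. pose proof (st_partial_le f l H Hf 0). simpl in H0. pose proof (H 0%nat). lra. Qed.

Lemma fin_ser f N : (forall n, (N <= n)%nat -> f n = 0) -> exists l, series_to f l.
Proof. apply st_finsupp_ex. Qed.

Lemma cl_adj lam b v y : l2 v -> l2 y -> (forall n, y n = jacobi_apply lam b v n) ->
  adjoint (closure (jacobi lam b)) v y.
Proof. intros Hv Hy Hyv. split; [auto|split; [auto|]].
  intros u x [Hu [Hx Hcl]] a c [Ha Hc].
  destruct (re_conv u y Hu Hy) as [a' Ha']. destruct (im_conv u y Hu Hy) as [c' Hc'].
  destruct Hv as [V HV]. destruct Hy as [Y HY].
  assert (HV0 : 0 <= V) by (apply (nonneg_lim _ _ (nsq_nonneg v) HV)).
  assert (HY0 : 0 <= Y) by (apply (nonneg_lim _ _ (nsq_nonneg y) HY)).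
  assert (key : forall e, 0 < e -> Rabs (a' - a) <= e /\ Rabs (c' - c) <= e).
  { intros e He. set (t := (V + Y + 1) / e). set (eps := e / (2 * t)).
    assert (Htp : 0 < t) by (unfold t; apply Rdiv_lt_0_compat; lra).
    assert (Hep : 0 < eps) by (unfold eps; apply Rdiv_lt_0_compat; lra).
    destruct (Hcl eps Hep) as [u' [x' [[[N HN] Hx'] [Hdu Hdx]]]].
    assert (Hz : forall n, (S N <= n)%nat -> x' n = (0,0)).
    { intros n Hn. rewrite Hx'. apply (jac_finsupp lam b u' N HN); auto. }
    destruct (fin_ser (re x' v) (S N)) as [a1 Ha1].
    { intros n Hn. unfold re. rewrite Hz by auto. simpl. ring. }
    destruct (fin_ser (im x' v) (S N)) as [c1 Hc1].
    { intros n Hn. unfold im. rewrite Hz by auto. simpl. ring. }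
    assert (Hin : inner_is (jacobi_apply lam b u') v a1 c1).
    { split; [apply st_ext with (2 := Ha1) | apply st_ext with (2 := Hc1)]; intro n; unfold re, im; rewrite Hx'; auto. }
    apply sym_fin in Hin; [|exists N; auto].
    destruct Hin as [Hr1 Hi1].
    assert (Hr1' : series_to (re u' y) a1).
    { apply st_ext with (2 := Hr1). intro n. unfold re. rewrite Hyv. auto. }
    assert (Hi1' : series_to (im u' y) c1).
    { apply st_ext with (2 := Hi1). intro n. unfold im. rewrite Hyv. auto. }
    pose proof (cont_re x x' v eps a a1 V t Htp Hdx Ha Ha1 HV) as E1.
    pose proof (cont_re u u' y eps a' a1 Y t Htp Hdu Ha' Hr1' HY) as E2.
    pose proof (cont_im x x' v eps c c1 V t Htp Hdx Hc Hc1 HV) as E3.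
    pose proof (cont_im u u' y eps c' c1 Y t Htp Hdu Hc' Hi1' HY) as E4.
    split.
    - apply (combine_small a a' a1 V Y e t eps); auto; lra.
    - apply (combine_small c c' c1 V Y e t eps); auto; lra. }
  assert (a' = a) by (apply eq_of_small; intros; apply key; auto).
  assert (c' = c) by (apply eq_of_small; intros; apply key; auto).
  subst. split; auto. Qed.

Lemma closure_sub_adj lam b u x : closure (jacobi lam b) u x -> adjoint (closure (jacobi lam b)) u x.
Proof. intros H. pose proof (closure_pw lam b u x H). destruct H as [Hu [Hx _]].
  apply cl_adj; auto. Qed.

Definition delta (n : nat) : Cseq := fun k => if Nat.eqb k n then (1, 0) else (0, 0).

Lemma sum_delta z n N : (n <= N)%nat -> sum_f_R0 (fun k => if Nat.eqb k n then z else 0) N = z.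
Proof. intros H. induction H.
  - destruct n. simpl. auto.
    change (sum_f_R0 (fun k => if Nat.eqb k (S n) then z else 0) n + (if Nat.eqb (S n) (S n) then z else 0) = z).
    rewrite Nat.eqb_refl. rewrite sum_eq_R0. ring.
    intros k Hk. destruct (Nat.eqb_spec k (S n)). lia. auto.
  - change (sum_f_R0 (fun k => if Nat.eqb k n then z else 0) m + (if Nat.eqb (S m) n then z else 0) = z).
    rewrite IHle. destruct (Nat.eqb_spec (S m) n). lia. ring. Qed.

Lemma delta_re q n : series_to (re (delta n) q) (fst (q n)).
Proof. apply st_ext with (fun k => if Nat.eqb k n then fst (q n) else 0).
  - intro k. unfold re, delta. destruct (Nat.eqb_spec k n); subst; simpl; ring.
  - apply st_evconst with (f := fun k => if Nat.eqb k n then fst (q n) else 0) (N := n).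
    auto. intros e He. exists n. intros m Hm. rewrite sum_delta by lia. unfold Rdist.
    rewrite Rminus_diag, Rabs_R0. auto. Qed.

Lemma delta_im q n : series_to (im (delta n) q) (- snd (q n)).
Proof. apply st_ext with (fun k => if Nat.eqb k n then - snd (q n) else 0).
  - intro k. unfold im, delta. destruct (Nat.eqb_spec k n); subst; simpl; ring.
  - apply st_evconst with (f := fun k => if Nat.eqb k n then - snd (q n) else 0) (N := n).
    auto. intros e He. exists n. intros m Hm. rewrite sum_delta by lia. unfold Rdist.
    rewrite Rminus_diag, Rabs_R0. auto. Qed.

Lemma delta_fin n : fin_supp (delta n).
Proof. exists (S n). intros k Hk. unfold delta. destruct (Nat.eqb_spec k n). lia. auto. Qed.

Lemma adj_pw lam b v y : adjoint (closure (jacobi lam b)) v y -> forall n, y n = jacobi_apply lam b v n.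
Proof. intros [Hv [Hy H]] n.
  assert (Hg : closure (jacobi lam b) (delta n) (jacobi_apply lam b (delta n))).
  { apply G_closure. split; auto. apply delta_fin. }
  destruct (delta_fin n) as [N HN].
  destruct (fin_ser (re (jacobi_apply lam b (delta n)) v) (S N)) as [a Ha].
  { intros k Hk. unfold re. rewrite (jac_finsupp lam b _ N HN) by auto. simpl. ring. }
  destruct (fin_ser (im (jacobi_apply lam b (delta n)) v) (S N)) as [c Hc].
  { intros k Hk. unfold im. rewrite (jac_finsupp lam b _ N HN) by auto. simpl. ring. }
  assert (Hin : inner_is (jacobi_apply lam b (delta n)) v a c) by (split; auto).
  pose proof (H _ _ Hg a c Hin) as [H1 H2].
  apply sym_fin in Hin; [|apply delta_fin]. destruct Hin as [H3 H4].
  pose proof (st_uniq _ _ _ H1 (delta_re y n)).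
  pose proof (st_uniq _ _ _ H3 (delta_re (jacobi_apply lam b v) n)).
  pose proof (st_uniq _ _ _ H2 (delta_im y n)).
  pose proof (st_uniq _ _ _ H4 (delta_im (jacobi_apply lam b v) n)).
  destruct (y n) as [y1 y2]. destruct (jacobi_apply lam b v n) as [z1 z2]. simpl in *.
  f_equal; lra. Qed.

Definition lamJ (n : nat) : R := 4 ^ Nat.div2 n.
Definition bJ (n : nat) : R := match n with O => -1 | S _ => -(3/2) * 4 ^ Nat.div2 n end.
Definition vJ : Cseq := fun n => ((/2) ^ Nat.div2 n, 0).
Definition wJ : Cseq := fun n => ((INR n + INR (Nat.div2 n)) * (/2) ^ Nat.div2 n, 0).

Lemma d2_e j : Nat.div2 (2*j) = j. Proof. apply Nat.div2_double. Qed.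
Lemma d2_o j : Nat.div2 (S (2*j)) = j. Proof. apply Nat.div2_succ_double. Qed.
Lemma d2_ee j : Nat.div2 (S (S (2*j))) = S j. Proof. change (Nat.div2 (S (S (2*j)))) with (S (Nat.div2 (2*j))). rewrite d2_e; auto. Qed.
Lemma d2_eo j : Nat.div2 (S (S (S (2*j)))) = S j. Proof. change (Nat.div2 (S (S (S (2*j))))) with (S (Nat.div2 (S (2*j)))). rewrite d2_o; auto. Qed.

Lemma four_pow j : 4 ^ j = 2 ^ j * 2 ^ j.
Proof. rewrite <- Rpow_mult_distr. f_equal. Qed.

Lemma two_pow_nz j : 2 ^ j <> 0.
Proof. apply pow_nonzero. lra. Qed.

Lemma rJ_v n : rJ lamJ bJ (fun k => fst (vJ k)) n = 0.
Proof. unfold rJ, lamJ, bJ, vJ; simpl fst. destruct n as [|m].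
  - simpl. ring.
  - destruct (Nat.Even_or_Odd m) as [[j ->]|[j ->]].
    + rewrite ?d2_e, ?d2_o, ?d2_ee, ?d2_eo. cbn [pow]. rewrite pow_inv, four_pow. field. apply two_pow_nz.
    + replace (2 * j + 1)%nat with (S (2*j)) by lia.
      rewrite ?d2_e, ?d2_o, ?d2_ee, ?d2_eo. cbn [pow]. rewrite pow_inv, four_pow. field. apply two_pow_nz. Qed.

Lemma rJ_w n : rJ lamJ bJ (fun k => fst (wJ k)) n = if Nat.eqb n 0 then 1 else 0.
Proof. unfold rJ, lamJ, bJ, wJ; simpl fst. destruct n as [|m].
  - simpl. ring.
  - change (Nat.eqb (S m) 0) with false. cbv iota.
    destruct (Nat.Even_or_Odd m) as [[j ->]|[j ->]].
    + rewrite ?d2_e, ?d2_o, ?d2_ee, ?d2_eo.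
      repeat (rewrite S_INR || rewrite mult_INR). replace (INR 2) with 2 by (simpl; lra).
      cbn [pow]. rewrite pow_inv, four_pow. field. apply two_pow_nz.
    + replace (2 * j + 1)%nat with (S (2*j)) by lia.
      rewrite ?d2_e, ?d2_o, ?d2_ee, ?d2_eo.
      repeat (rewrite S_INR || rewrite mult_INR). replace (INR 2) with 2 by (simpl; lra).
      cbn [pow]. rewrite pow_inv, four_pow. field. apply two_pow_nz. Qed.

Lemma geo_l2 f C q : 0 <= q < 1 -> 0 <= C -> (forall n, 0 <= f n <= C * q ^ n) -> exists l, series_to f l.
Proof. intros Hq HC H. destruct (st_nonneg_bound f (C / (1 - q))) as [l [Hl _]].
  - intro n; apply H.
  - intro N. apply Rle_trans with (sum_f_R0 (fun n => C * q ^ n) N).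
    apply sum_Rle; intros; apply H.
    rewrite (sum_eq _ (fun i => q ^ i * C)) by (intros; ring). rewrite <- scal_sum.
    rewrite tech3 by lra. assert (0 <= q ^ S N) by (apply pow_le; lra).
    unfold Rdiv. rewrite <- Rmult_assoc. apply Rmult_le_compat_r.
    left; apply Rinv_0_lt_compat; lra. nra.
  - eauto. Qed.

Lemma k1_le k : (INR k + 1) ^ 2 <= 2 * 3 ^ k.
Proof. induction k.
  - simpl. lra.
  - rewrite S_INR. cbn [pow] in *. pose proof (pos_INR k).
    destruct k. simpl. lra.
    rewrite S_INR in *. assert (0 <= INR k) by apply pos_INR. nra. Qed.

Lemma seven8 n : (3/4) ^ Nat.div2 n <= 2 * (7/8) ^ n.
Proof. assert (H : forall k, (3/4) ^ k <= (7/8) ^ (2 * k)).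
  { intro k. rewrite pow_mult. apply pow_incr. lra. }
  destruct (Nat.Even_or_Odd n) as [[k ->]|[k ->]].
  - rewrite d2_e. pose proof (H k). pose proof (pow_le (7/8) (2*k)). lra.
  - replace (2 * k + 1)%nat with (S (2*k)) by lia. rewrite d2_o. cbn [pow].
    pose proof (H k). pose proof (pow_le (7/8) (2*k)). lra. Qed.

Lemma n_le_div2 n : INR n <= 2 * INR (Nat.div2 n) + 1.
Proof. destruct (Nat.Even_or_Odd n) as [[k ->]|[k ->]].
  - rewrite d2_e, mult_INR. simpl. lra.
  - replace (2 * k + 1)%nat with (S (2*k)) by lia. rewrite d2_o, S_INR, mult_INR. simpl. lra. Qed.

Lemma half_sq k : ((/2) ^ k) ^ 2 = (/4) ^ k.
Proof. rewrite <- pow_mult, Nat.mul_comm, pow_mult. f_equal. field. Qed.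

Lemma l2_vJ : l2 vJ.
Proof. apply (geo_l2 _ 2 (7/8)); try lra. intro n. unfold nsq, vJ; simpl fst; simpl snd.
  split. pose proof (pow2_ge_0 ((/2)^Nat.div2 n)). lra.
  rewrite half_sq. pose proof (seven8 n). assert ((/4) ^ Nat.div2 n <= (3/4) ^ Nat.div2 n).
  apply pow_incr; lra. lra. Qed.

Lemma l2_wJ : l2 wJ.
Proof. apply (geo_l2 _ 36 (7/8)); try lra. intro n. unfold wJ; simpl fst; simpl snd.
  set (k := Nat.div2 n). split.
  pose proof (pow2_ge_0 ((INR n + INR k) * (/2)^k)). lra.
  rewrite Rpow_mult_distr, half_sq.
  pose proof (n_le_div2 n) as HN. fold k in HN. pose proof (pos_INR n). pose proof (pos_INR k).
  assert (A : (INR n + INR k) ^ 2 <= 9 * (INR k + 1) ^ 2) by nra.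
  pose proof (k1_le k).
  assert (B : 0 <= (/4) ^ k) by (apply pow_le; lra).
  assert (C : 3 ^ k * (/4) ^ k = (3/4) ^ k) by (rewrite <- Rpow_mult_distr; f_equal).
  pose proof (seven8 n) as S8. fold k in S8.
  assert ((INR n + INR k) ^ 2 * (/4)^k <= 18 * (3 ^ k * (/4)^k)) by nra.
  lra. Qed.

Lemma st_zero f : (forall n, f n = 0) -> series_to f 0.
Proof. intros H. pose proof (st_finsupp f 0 (fun n _ => H n)). simpl in H0. rewrite H in H0. auto. Qed.

Lemma not_ess : ~ ess_selfadjoint (jacobi lamJ bJ).
Proof. intro H.
  set (z0 := fun _ : nat => ((0:R), (0:R))).
  assert (A1 : adjoint (closure (jacobi lamJ bJ)) vJ z0).
  { apply cl_adj. apply l2_vJ. apply finsupp_l2. exists 0%nat. auto.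
    intro n. unfold z0. apply injective_projections; rewrite ?japp_fst, ?japp_snd; simpl.
    rewrite rJ_v. auto. unfold rJ, vJ. simpl. destruct n; ring. }
  assert (A2 : adjoint (closure (jacobi lamJ bJ)) wJ (delta 0)).
  { apply cl_adj. apply l2_wJ. apply finsupp_l2. apply delta_fin.
    intro n. apply injective_projections; rewrite ?japp_fst, ?japp_snd.
    rewrite rJ_w. unfold delta. destruct (Nat.eqb n 0); auto.
    unfold rJ, wJ, delta. simpl. destruct (Nat.eqb n 0); destruct n; simpl; ring. }
  apply H in A1. destruct A2 as [_ [_ A2]].
  assert (Hin : inner_is z0 wJ 0 0).
  { split; apply st_zero; intro n; unfold z0; simpl; ring. }
  destruct (A2 _ _ A1 0 0 Hin) as [Hr _].
  assert (Hr' : series_to (re (delta 0) vJ) 0).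
  { apply st_ext with (2 := Hr). intro n. unfold re, delta. destruct (Nat.eqb n 0); simpl; ring. }
  pose proof (st_uniq _ _ _ Hr' (delta_re vJ 0)). simpl in H0. lra. Qed.

Definition z0f : nat -> R := fun _ => 0.
Definition Jr (f : nat -> R) := rJ lamJ z0f f.
Definition aa (k : nat) : R := 4 ^ k.
Definition wt (K L k : nat) : R := if (k <=? K + L)%nat then INR (K + L - k) / INR L else 0.
Definition hE (f : nat -> R) (M k : nat) : R := if (k <=? M)%nat then f (2 * k)%nat else 0.
Definition hO (f : nat -> R) (K L k : nat) : R :=
  if (k <=? K)%nat then f (S (2 * k)) else (-1) ^ (k - K) * (aa K / aa k) * f (S (2 * K)) * wt K L k.
Definition happ f K L M (n : nat) : R :=
  if Nat.even n then hE f M (Nat.div2 n) else hO f K L (Nat.div2 n).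

Lemma happ_e f K L M k : happ f K L M (2 * k) = hE f M k.
Proof. unfold happ. rewrite Nat.even_even, d2_e. auto. Qed.
Lemma happ_o f K L M k : happ f K L M (S (2 * k)) = hO f K L k.
Proof. unfold happ. replace (S (2 * k)) with (2 * k + 1)%nat by lia. rewrite Nat.even_odd.
  replace (2 * k + 1)%nat with (S (2 * k)) by lia. rewrite d2_o. auto. Qed.

Lemma aa_pos k : 0 < aa k.
Proof. unfold aa. apply pow_lt. lra. Qed.

Lemma Jr_0 f : Jr f 0 = f 1%nat.
Proof. unfold Jr, rJ, lamJ, z0f. simpl. ring. Qed.
Lemma Jr_e f k : Jr f (2 * S k) = aa (S k) * f (S (2 * S k)) + aa k * f (S (2 * k)).
Proof. unfold Jr, rJ, lamJ, z0f, aa. rewrite d2_e. replace (2 * S k)%nat with (S (S (2 * k))) by lia.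
  rewrite d2_o. ring. Qed.
Lemma Jr_o f k : Jr f (S (2 * k)) = aa k * f (2 * S k)%nat + aa k * f (2 * k)%nat.
Proof. unfold Jr, rJ, lamJ, z0f, aa. rewrite d2_o. replace (2 * S k)%nat with (S (S (2 * k))) by lia.
  rewrite d2_e. ring. Qed.

Lemma n_cases n : n = 0%nat \/ (exists k, n = 2 * S k)%nat \/ (exists k, n = S (2 * k)).
Proof. destruct (Nat.Even_or_Odd n) as [[k ->]|[k ->]].
  - destruct k. left; lia. right; left; eauto.
  - right; right. exists k. lia. Qed.

Lemma hO_gen f K L k : (1 <= L)%nat -> (K <= k)%nat ->
  hO f K L k = (-1) ^ (k - K) * (aa K / aa k) * f (S (2 * K)) * wt K L k.
Proof. intros HL Hk. unfold hO. destruct (Nat.leb_spec k K).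
  - assert (k = K) by lia. subst K. rewrite Nat.sub_diag. unfold wt.
    rewrite (proj2 (Nat.leb_le _ _)) by lia. replace (k + L - k)%nat with L by lia.
    simpl. field. split. apply not_0_INR; lia. pose proof (aa_pos k). lra.
  - auto. Qed.

Lemma wt_bounds K L k : (1 <= L)%nat -> (K <= k)%nat -> 0 <= wt K L k <= 1.
Proof. intros HL Hk. unfold wt. destruct (Nat.leb_spec k (K + L)).
  - assert (0 < INR L) by (apply lt_0_INR; lia). split.
    + apply Rmult_le_pos. apply pos_INR. left; apply Rinv_0_lt_compat; auto.
    + apply Rmult_le_reg_r with (INR L); auto. unfold Rdiv. rewrite Rmult_assoc, Rinv_l by lra.
      rewrite Rmult_1_r, Rmult_1_l. apply le_INR. lia.
  - lra. Qed.

Lemma wt_step K L k : (1 <= L)%nat -> (K <= k)%nat ->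
  (wt K L k - wt K L (S k)) ^ 2 <= if ((2 * K <? 2 * S k) && (2 * S k <=? 2 * K + 2 * L))%nat then / INR L ^ 2 else 0.
Proof. intros HL Hk. assert (0 < INR L) by (apply lt_0_INR; lia). unfold wt.
  destruct (Nat.leb_spec k (K + L)); destruct (Nat.leb_spec (S k) (K + L));
  destruct (Nat.ltb_spec (2 * K) (2 * S k)); destruct (Nat.leb_spec (2 * S k) (2 * K + 2 * L)); simpl; try lia.
  - replace (K + L - k)%nat with (S (K + L - S k)) by lia. rewrite S_INR. right. field. lra.
  - assert (k = K + L)%nat by lia. subst. rewrite Nat.sub_diag. simpl. right. field. lra.
  - right; ring. Qed.

Lemma sq_diff_le x y : (x - y) ^ 2 <= 2 * x ^ 2 + 2 * y ^ 2.
Proof. pose proof (pow2_ge_0 (x + y)). nra. Qed.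

Lemma ind_ge f m n : (m < n)%nat -> indf f m n = f n.
Proof. intros H. unfold indf. rewrite (proj2 (Nat.ltb_lt _ _)) by auto. auto. Qed.

Lemma if_nonneg (b : bool) c : 0 <= c -> 0 <= (if b then c else 0).
Proof. destruct b; lra. Qed.

Lemma neg1_sq j : ((-1) ^ j) ^ 2 = 1.
Proof. rewrite <- pow_mult, Nat.mul_comm, pow_mult. replace ((-1)^2) with 1 by ring. apply pow1. Qed.

Lemma err_pt f K L M n : (1 <= L)%nat -> (K <= M)%nat ->
  (Jr f n - Jr (happ f K L M) n) ^ 2 <= 2 * indf (fun n => Jr f n ^ 2) (2 * K) n
   + (if ((2 * K <? n) && (n <=? 2 * K + 2 * L))%nat then 2 * (aa K * f (S (2 * K))) ^ 2 / INR L ^ 2 else 0)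
   + (if Nat.eqb n (S (2 * M)) then (aa M * f (2 * S M)%nat) ^ 2 else 0).
Proof. intros HL HKM.
  assert (HLp : 0 < INR L) by (apply lt_0_INR; lia).
  assert (P1 : 0 <= 2 * indf (fun n => Jr f n ^ 2) (2 * K) n) by (pose proof (indf_nonneg (fun n => Jr f n ^ 2) (2*K) n (fun n => pow2_ge_0 _)); lra).
  assert (P2 : 0 <= (if ((2 * K <? n) && (n <=? 2 * K + 2 * L))%nat then 2 * (aa K * f (S (2 * K))) ^ 2 / INR L ^ 2 else 0)).
  { apply if_nonneg. apply Rmult_le_pos. pose proof (pow2_ge_0 (aa K * f (S (2 * K)))). lra.
    left. apply Rinv_0_lt_compat. apply pow_lt; auto. }
  assert (P3 : 0 <= (if Nat.eqb n (S (2 * M)) then (aa M * f (2 * S M)%nat) ^ 2 else 0)).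
  { apply if_nonneg. apply pow2_ge_0. }
  destruct (n_cases n) as [->|[[k ->]|[k ->]]].
  - rewrite !Jr_0. assert (E : happ f K L M 1 = f 1%nat) by (unfold happ, hO; simpl; reflexivity).
    rewrite E. replace (f 1%nat - f 1%nat) with 0 by ring.
    replace (0 ^ 2) with 0 by ring. lra.
  - rewrite !Jr_e, !happ_o.
    destruct (Nat.leb_spec (S k) K).
    + unfold hO. rewrite (proj2 (Nat.leb_le (S k) K)) by lia. rewrite (proj2 (Nat.leb_le k K)) by lia.
      replace (aa (S k) * f (S (2 * S k)) + aa k * f (S (2 * k)) - (aa (S k) * f (S (2 * S k)) + aa k * f (S (2 * k)))) with 0 by ring.
      replace (0 ^ 2) with 0 by ring. lra.
    + rewrite (hO_gen f K L (S k)), (hO_gen f K L k) by lia.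
      replace (S k - K)%nat with (S (k - K)) by lia. change ((-1) ^ S (k - K)) with (-1 * (-1) ^ (k - K)).
      set (F := f (S (2 * K))). set (s := (-1) ^ (k - K)).
      pose proof (aa_pos k). pose proof (aa_pos (S k)).
      replace (aa (S k) * (-1 * s * (aa K / aa (S k)) * F * wt K L (S k)) + aa k * (s * (aa K / aa k) * F * wt K L k))
        with (s * (aa K * F) * (wt K L k - wt K L (S k))) by (field; lra).
      rewrite <- Jr_e.
      eapply Rle_trans. apply sq_diff_le.
      rewrite ind_ge by lia.
      rewrite !Rpow_mult_distr. unfold s. rewrite neg1_sq, Rmult_1_l.
      pose proof (wt_step K L k HL ltac:(lia)).
      destruct ((2 * K <? 2 * S k) && (2 * S k <=? 2 * K + 2 * L))%nat.
      * assert ((aa K ^ 2 * F ^ 2) * (wt K L k - wt K L (S k)) ^ 2 <= (aa K ^ 2 * F ^ 2) * / INR L ^ 2).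
        { apply Rmult_le_compat_l; auto. pose proof (pow2_ge_0 (aa K)). pose proof (pow2_ge_0 F). nra. }
        rewrite Rpow_mult_distr in P3. unfold Rdiv in *. lra.
      * assert ((aa K ^ 2 * F ^ 2) * (wt K L k - wt K L (S k)) ^ 2 <= (aa K ^ 2 * F ^ 2) * 0).
        { apply Rmult_le_compat_l; auto. pose proof (pow2_ge_0 (aa K)). pose proof (pow2_ge_0 F). nra. }
        rewrite Rpow_mult_distr in P3. lra.
  - rewrite !Jr_o, !happ_e. unfold hE.
    destruct (Nat.ltb_spec k M).
    + rewrite (proj2 (Nat.leb_le (S k) M)) by lia. rewrite (proj2 (Nat.leb_le k M)) by lia.
      replace (aa k * f (2 * S k)%nat + aa k * f (2 * k)%nat - aa k * (f (2 * S k)%nat + f (2 * k)%nat)) with 0 by ring.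
      replace (0 ^ 2) with 0 by ring. lra.
    + destruct (Nat.eqb_spec k M).
      * subst k. rewrite (proj2 (Nat.leb_le M M)) by lia.
        destruct (Nat.leb_spec (S M) M). lia. rewrite Nat.eqb_refl.
        replace (aa M * f (2 * S M)%nat + aa M * f (2 * M)%nat - aa M * (0 + f (2 * M)%nat)) with (aa M * f (2 * S M)%nat) by ring.
        lra.
      * destruct (Nat.leb_spec (S k) M). lia. destruct (Nat.leb_spec k M). lia.
        rewrite ind_ge by lia. rewrite <- Jr_o.
        replace (Jr f (S (2 * k)) - (aa k * 0 + aa k * 0)) with (Jr f (S (2 * k))) by ring. pose proof (pow2_ge_0 (Jr f (S (2*k)))). lra. Qed.

Lemma aa_ratio K k : (aa K / aa k) ^ 2 = 4 ^ (S (2 * K)) * (/ 4) ^ (S (2 * k)).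
Proof. unfold aa. rewrite pow_inv. cbn [pow].
  replace (4 ^ (2 * K)) with (4 ^ K * 4 ^ K) by (rewrite <- pow_add; f_equal; lia).
  replace (4 ^ (2 * k)) with (4 ^ k * 4 ^ k) by (rewrite <- pow_add; f_equal; lia).
  assert (4 ^ k <> 0) by (apply pow_nonzero; lra). field. auto. Qed.

Lemma diff_pt f K L M n : (1 <= L)%nat -> (K <= M)%nat ->
  (f n - happ f K L M n) ^ 2 <= 2 * indf (fun n => f n ^ 2) (2 * K) n
     + (2 * f (S (2 * K)) ^ 2 * 4 ^ (S (2 * K))) * indf (fun n => (/4) ^ n) (S (2 * K)) n.
Proof. intros HL HKM.
  assert (P1 : 0 <= 2 * indf (fun n => f n ^ 2) (2 * K) n) by (pose proof (indf_nonneg (fun n => f n ^ 2) (2*K) n (fun n => pow2_ge_0 _)); lra).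
  assert (P2 : 0 <= (2 * f (S (2 * K)) ^ 2 * 4 ^ (S (2 * K))) * indf (fun n => (/4) ^ n) (S (2 * K)) n).
  { apply Rmult_le_pos. pose proof (pow2_ge_0 (f (S (2 * K)))). pose proof (pow_le 4 (S (2*K))). nra.
    apply indf_nonneg. intro. apply pow_le. lra. }
  destruct (n_cases n) as [->|[[k ->]|[k ->]]].
  - assert (E : happ f K L M 0 = f 0%nat) by (unfold happ, hE; simpl; reflexivity).
    rewrite E. replace (f 0%nat - f 0%nat) with 0 by ring. replace (0 ^ 2) with 0 by ring. lra.
  - rewrite happ_e. unfold hE. destruct (Nat.leb_spec (S k) M).
    + replace (f (2 * S k)%nat - f (2 * S k)%nat) with 0 by ring. replace (0 ^ 2) with 0 by ring. lra.
    + rewrite ind_ge by lia. replace (f (2 * S k)%nat - 0) with (f (2 * S k)%nat) by ring.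
      pose proof (pow2_ge_0 (f (2 * S k)%nat)). lra.
  - rewrite happ_o. destruct (Nat.leb_spec k K).
    + unfold hO. rewrite (proj2 (Nat.leb_le k K)) by lia.
      replace (f (S (2 * k)) - f (S (2 * k))) with 0 by ring. replace (0 ^ 2) with 0 by ring. lra.
    + rewrite hO_gen by lia. eapply Rle_trans. apply sq_diff_le.
      rewrite !ind_ge by lia.
      rewrite !Rpow_mult_distr, neg1_sq, Rmult_1_l, aa_ratio.
      pose proof (wt_bounds K L k HL ltac:(lia)).
      assert (wt K L k ^ 2 <= 1) by nra.
      set (A := 4 ^ S (2 * K) * (/ 4) ^ S (2 * k) * f (S (2 * K)) ^ 2).
      assert (0 <= A). { unfold A. pose proof (pow2_ge_0 (f (S (2 * K)))).
        assert (0 <= 4 ^ S (2*K)) by (apply pow_le; lra). assert (0 <= (/4) ^ S (2*k)) by (apply pow_le; lra).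
        apply Rmult_le_pos; auto. apply Rmult_le_pos; lra. }
      assert (A * wt K L k ^ 2 <= A).
      { rewrite <- (Rmult_1_r A) at 2. apply Rmult_le_compat_l; auto. }
      replace (2 * f (S (2 * K)) ^ 2 * 4 ^ S (2 * K) * (/ 4) ^ S (2 * k)) with (2 * A) by (unfold A; ring).
      lra. Qed.

Lemma sum_pt z p N : 0 <= z -> sum_f_R0 (fun n => if Nat.eqb n p then z else 0) N <= z.
Proof. intros Hz. destruct (Nat.le_gt_cases p N).
  - rewrite sum_delta by auto. lra.
  - rewrite sum_eq_R0. auto. intros n Hn. destruct (Nat.eqb_spec n p). lia. auto. Qed.

Lemma aa_inv m : aa m * (/4) ^ m = 1.
Proof. unfold aa. rewrite pow_inv. field. apply pow_nonzero. lra. Qed.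

Lemma chain_step f j : Rabs (f (2 * j)%nat) <= Rabs (f (2 * S j)%nat) + Rabs (Jr f (S (2 * j))) * (/4) ^ j.
Proof. rewrite Jr_o. pose proof (aa_inv j).
  set (x := f (2 * j)%nat). set (y := f (2 * S j)%nat). set (q := (/4) ^ j).
  assert (Hq : 0 <= q) by (apply pow_le; lra).
  assert (E : x = (aa j * y + aa j * x) * q - y).
  { replace ((aa j * y + aa j * x) * q) with ((aa j * q) * (y + x)) by ring. unfold q; rewrite H. ring. }
  rewrite E at 1. eapply Rle_trans. apply Rabs_triang. rewrite Rabs_Ropp, Rabs_mult.
  rewrite (Rabs_pos_eq q) by auto. lra. Qed.

Lemma decay f F G : series_to (fun n => f n ^ 2) F -> series_to (fun n => Jr f n ^ 2) G ->
  forall d, 0 < d -> forall K, exists M, (K <= M)%nat /\ (aa M * f (2 * S M)%nat) ^ 2 < d.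
Proof. intros HF HG d Hd K.
  set (eta := Rmin 1 (d / 8)).
  assert (He : 0 < eta) by (unfold eta; apply Rmin_glb_lt; lra).
  assert (He1 : eta <= 1) by (unfold eta; apply Rmin_l).
  assert (He2 : eta <= d / 8) by (unfold eta; apply Rmin_r).
  destruct (term_small _ _ (fun n => pow2_ge_0 _) HG (eta ^ 2) ltac:(apply pow_lt; lra)) as [N0 HN0].
  set (M := Nat.max K N0).
  assert (Hg : forall j, (M <= j)%nat -> Rabs (Jr f (S (2 * j))) < eta).
  { intros j Hj. apply sq_lt_abs; auto. apply HN0. unfold M in Hj. lia. }
  assert (Inv : forall p m, (M <= m)%nat -> Rabs (f (2 * m)%nat) <= Rabs (f (2 * (m + p))%nat) + eta * (4/3) * ((/4)^m - (/4)^(m+p))).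
  { induction p; intros m Hm.
    - rewrite Nat.add_0_r. rewrite Rminus_diag. lra.
    - pose proof (chain_step f m). pose proof (IHp (S m) ltac:(lia)).
      replace (S m + p)%nat with (m + S p)%nat in H0 by lia.
      pose proof (Hg m Hm). assert (0 <= (/4)^m) by (apply pow_le; lra).
      assert (Rabs (Jr f (S (2 * m))) * (/4)^m <= eta * (/4)^m) by (apply Rmult_le_compat_r; lra).
      replace (2 * S m)%nat with (2 * (S m + 0))%nat in H by lia.
      replace (S m + 0)%nat with (S m) in H by lia.
      cbn [pow] in H0. lra. }
  assert (HM4 : 0 < (/4) ^ M) by (apply pow_lt; lra).
  destruct (term_small _ _ (fun n => pow2_ge_0 _) HF ((eta * (/4)^M) ^ 2) ltac:(apply pow_lt; nra)) as [N1 HN1].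
  pose proof (Inv N1 (S M) ltac:(lia)) as I1.
  assert (Rabs (f (2 * (S M + N1))%nat) < eta * (/4)^M) by (apply sq_lt_abs; [nra| apply HN1; lia]).
  assert (0 <= (/4) ^ (S M + N1)) by (apply pow_le; lra).
  cbn [pow] in I1.
  assert (0 <= eta * (4/3) * (/4)^(S M + N1)) by (apply Rmult_le_pos; lra).
  assert (Hb : Rabs (f (2 * S M)%nat) <= eta * (/4)^M * (4/3)) by nra.
  exists M. split. unfold M; lia.
  assert (Hb2 : Rabs (aa M * f (2 * S M)%nat) <= eta * (4/3)).
  { rewrite Rabs_mult, Rabs_pos_eq by (left; apply aa_pos).
    pose proof (aa_pos M). pose proof (aa_inv M).
    apply Rle_trans with (aa M * (eta * (/4)^M * (4/3))). apply Rmult_le_compat_l; lra.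
    replace (aa M * (eta * (/4)^M * (4/3))) with ((aa M * (/4)^M) * (eta * (4/3))) by ring.
    rewrite (aa_inv M). lra. }
  rewrite <- (pow2_abs (aa M * f (2 * S M)%nat)).
  pose proof (Rabs_pos (aa M * f (2 * S M)%nat)).
  assert (Rabs (aa M * f (2 * S M)%nat) ^ 2 <= (eta * (4/3)) ^ 2) by (apply pow_incr; lra).
  nra. Qed.

Lemma sum_scal c f N : sum_f_R0 (fun n => c * f n) N = c * sum_f_R0 f N.
Proof. rewrite scal_sum. apply sum_eq. intros; ring. Qed.

Lemma sum_plus3 f g h N : sum_f_R0 (fun n => f n + g n + h n) N = sum_f_R0 f N + sum_f_R0 g N + sum_f_R0 h N.
Proof. rewrite (plus_sum (fun n => f n + g n)), plus_sum. ring. Qed.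

Lemma pow4_inv m : 4 ^ m * (/4) ^ m = 1.
Proof. rewrite pow_inv. field. apply pow_nonzero. lra. Qed.

Lemma happ_fin f K L M n : (2 * (K + L + M) + 3 <= n)%nat -> happ f K L M n = 0.
Proof. intros Hn. destruct (Nat.Even_or_Odd n) as [[k ->]|[k ->]].
  - rewrite happ_e. unfold hE. destruct (Nat.leb_spec k M). lia. auto.
  - replace (2 * k + 1)%nat with (S (2 * k)) by lia. rewrite happ_o. unfold hO.
    destruct (Nat.leb_spec k K). lia. unfold wt. destruct (Nat.leb_spec k (K + L)). lia. ring. Qed.

Lemma RA f F G : series_to (fun n => f n ^ 2) F -> series_to (fun n => Jr f n ^ 2) G ->
  forall eps, 0 < eps -> exists h, (exists N, forall n, (N <= n)%nat -> h n = 0) /\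
    (exists l, series_to (fun n => (f n - h n) ^ 2) l /\ l < eps) /\
    (exists l, series_to (fun n => (Jr f n - Jr h n) ^ 2) l /\ l < eps).
Proof. intros HF HG eps He.
  destruct (tail_small _ _ HF (eps / 4) ltac:(lra)) as [mf Hmf].
  destruct (tail_small _ _ HG (eps / 6) ltac:(lra)) as [mg Hmg].
  set (K := (mf + mg)%nat).
  set (tf := F - sum_f_R0 (fun n => f n ^ 2) (2 * K)).
  set (tg := G - sum_f_R0 (fun n => Jr f n ^ 2) (2 * K)).
  assert (Htf : tf < eps / 4) by (apply Hmf; unfold K; lia).
  assert (Htg : tg < eps / 6) by (apply Hmg; unfold K; lia).
  set (C := aa K * f (S (2 * K))).
  destruct (INR_archimed eps (12 * C ^ 2) He) as [L0 HL0].
  set (L := S L0).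
  assert (HL : INR L * eps > 12 * C ^ 2) by (unfold L; rewrite S_INR; lra).
  assert (HLp : 0 < INR L) by (unfold L; apply lt_0_INR; lia).
  destruct (decay f F G HF HG (eps / 3) ltac:(lra) K) as [M [HKM HP]].
  exists (happ f K L M). split; [|split].
  - exists (2 * (K + L + M) + 3)%nat. intros; apply happ_fin; auto.
  - set (c3 := 2 * f (S (2 * K)) ^ 2 * 4 ^ (S (2 * K))).
    assert (Hc3 : 0 <= c3) by (unfold c3; pose proof (pow2_ge_0 (f (S (2 * K)))); pose proof (pow_le 4 (S (2*K)) ltac:(lra)); nra).
    destruct (st_nonneg_bound (fun n => (f n - happ f K L M n) ^ 2) (2 * tf + c3 * ((/4) ^ S (S (2 * K)) / (1 - /4)))) as [l [Hl Hle]].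
    + intro n. apply pow2_ge_0.
    + intro N. eapply Rle_trans. apply sum_Rle. intros n _. apply (diff_pt f K L M n); unfold L; lia.
      rewrite plus_sum, !sum_scal.
      pose proof (tail_bound _ _ (2 * K) N (fun n => pow2_ge_0 _) HF). fold tf in H.
      pose proof (sum_geo (/4) (S (2 * K)) N ltac:(lra)).
      assert (c3 * sum_f_R0 (indf (fun n => (/ 4) ^ n) (S (2 * K))) N <= c3 * ((/4) ^ S (S (2 * K)) / (1 - /4)))
        by (apply Rmult_le_compat_l; auto). fold c3. lra.
    + exists l. split; auto.
      assert (E : c3 * ((/4) ^ S (S (2 * K)) / (1 - /4)) = (2/3) * f (S (2 * K)) ^ 2).
      { assert (E1 : (/4) ^ (S (S (2 * K))) = /16 * (/4) ^ (2 * K)) by (cbn [pow]; field).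
        assert (E2 : 4 ^ (S (2 * K)) = 4 * 4 ^ (2 * K)) by (cbn [pow]; ring).
        unfold c3. rewrite E1, E2. pose proof (pow4_inv (2 * K)).
        replace (2 * f (S (2 * K)) ^ 2 * (4 * 4 ^ (2 * K)) * (/ 16 * (/ 4) ^ (2 * K) / (1 - / 4)))
          with ((2/3) * f (S (2 * K)) ^ 2 * (4 ^ (2 * K) * (/ 4) ^ (2 * K))) by field.
        rewrite H. ring. }
      pose proof (term_le_tail _ _ (2 * K) (fun n => pow2_ge_0 _) HF). cbv beta in H. fold tf in H.
      rewrite E in Hle. lra.
  - set (c2 := 2 * C ^ 2 / INR L ^ 2).
    assert (Hc2 : 0 <= c2) by (unfold c2; apply Rmult_le_pos; [pose proof (pow2_ge_0 C); lra | left; apply Rinv_0_lt_compat; apply pow_lt; auto]).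
    destruct (st_nonneg_bound (fun n => (Jr f n - Jr (happ f K L M) n) ^ 2)
       (2 * tg + c2 * INR (2 * L) + (aa M * f (2 * S M)%nat) ^ 2)) as [l [Hl Hle]].
    + intro n. apply pow2_ge_0.
    + intro N. eapply Rle_trans. apply sum_Rle. intros n _. apply (err_pt f K L M n); unfold L; lia.
      rewrite sum_plus3, sum_scal.
      pose proof (tail_bound _ _ (2 * K) N (fun n => pow2_ge_0 _) HG). fold tg in H.
      pose proof (sum_cnt c2 (2 * K) (2 * L) N Hc2).
      pose proof (sum_pt ((aa M * f (2 * S M)%nat) ^ 2) (S (2 * M)) N (pow2_ge_0 _)).
      fold C. fold c2. lra.
    + exists l. split; auto.
      assert (c2 * INR (2 * L) < eps / 3).
      { unfold c2. rewrite mult_INR. simpl (INR 2).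
        replace (2 * C ^ 2 / INR L ^ 2 * ((1 + 1) * INR L)) with (4 * C ^ 2 / INR L) by (field; lra).
        apply Rmult_lt_reg_r with (INR L); auto. unfold Rdiv. rewrite Rmult_assoc, Rinv_l by lra. lra. }
      lra. Qed.

Lemma l2_fst v : l2 v -> exists F, series_to (fun n => fst (v n) ^ 2) F.
Proof. intros [l Hl]. apply st_comp with (2 := Hl). intro n. split. apply pow2_ge_0.
  pose proof (pow2_ge_0 (snd (v n))). lra. Qed.
Lemma l2_snd v : l2 v -> exists F, series_to (fun n => snd (v n) ^ 2) F.
Proof. intros [l Hl]. apply st_comp with (2 := Hl). intro n. split. apply pow2_ge_0.
  pose proof (pow2_ge_0 (fst (v n))). lra. Qed.

Lemma ess_Jp : ess_selfadjoint (jacobi lamJ (fun _ => 0)).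
Proof. intros v y. split.
  - apply closure_sub_adj.
  - intros Hadj. pose proof (adj_pw _ _ _ _ Hadj) as Hyv. destruct Hadj as [Hv [Hy _]].
    split; [auto | split; [auto|]].
    intros eps He.
    destruct (l2_fst v Hv) as [F1 HF1]. destruct (l2_snd v Hv) as [F2 HF2].
    destruct (l2_fst y Hy) as [G1 HG1]. destruct (l2_snd y Hy) as [G2 HG2].
    assert (HG1' : series_to (fun n => Jr (fun k => fst (v k)) n ^ 2) G1).
    { apply st_ext with (2 := HG1). intro n. rewrite Hyv, japp_fst. reflexivity. }
    assert (HG2' : series_to (fun n => Jr (fun k => snd (v k)) n ^ 2) G2).
    { apply st_ext with (2 := HG2). intro n. rewrite Hyv, japp_snd. reflexivity. }
    destruct (RA _ _ _ HF1 HG1' (eps / 2) ltac:(lra)) as [h1 [[N1 HN1] [[l1 [Hl1 Hl1e]] [m1 [Hm1 Hm1e]]]]].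
    destruct (RA _ _ _ HF2 HG2' (eps / 2) ltac:(lra)) as [h2 [[N2 HN2] [[l2' [Hl2 Hl2e]] [m2 [Hm2 Hm2e]]]]].
    set (u' := fun n => (h1 n, h2 n)).
    exists u', (jacobi_apply lamJ (fun _ => 0) u'). split; [split|split].
    + exists (Nat.max N1 N2). intros n Hn. unfold u'. rewrite HN1, HN2 by lia. auto.
    + auto.
    + exists (l1 + l2'). split; [|lra].
      apply st_ext with (2 := st_plus _ _ _ _ Hl1 Hl2). intro n. unfold u'. simpl. auto.
    + exists (m1 + m2). split; [|lra].
      apply st_ext with (2 := st_plus _ _ _ _ Hm1 Hm2). intro n. rewrite Hyv, !japp_fst, !japp_snd.
      unfold u'. simpl. reflexivity. Qed.

Theorem lemma5 :
  exists (lam b : nat -> R),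
    (forall n, 0 < lam n) /\
    ~ ess_selfadjoint (jacobi lam b) /\
    ess_selfadjoint (jacobi lam (fun _ => 0)).
Proof. exists lamJ, bJ. split; [|split].
  - intro n. unfold lamJ. apply pow_lt. lra.
  - apply not_ess.
  - apply ess_Jp. Qed.
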